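(* Let $X$ be the vertex set of a dual polar graph of diameter $d$ with distance $\partial$ and base vertex $u_0\in X$. Let $x,y\in X$, $U=x\cap y$, $\ell=\dim(u_0\cap U)$, and $X'=\{z\in X: U\subseteq z\}$. Then the pointwise product satisfies \[ f_xf_y=\sum_{\substack{z\in X'\\ f_x(z)=f_y(z)=1}} f_z\ \in\ \mathrm{Hom}_{d-\ell}(X). \]
   Context: Let $V$ be a finite-dimensional vector space over a finite field with a non-degenerate alternating, Hermitian, or quadratic form of Witt index $d$; $X$ is the set of maximal totally isotropic subspaces (dimension $d$), adjacent iff their intersection has dimension $d-1$, with distance $\partial(x,y)=d-\dim(x\cap y)$. Shells: $X_j=\{z\in X:\partial(u_0,z)=j\}$. For $z\in X$, $f_z:X\to\mathbb{R}$ is defined by $f_z(w)=1$ if $\partial(u_0,z)+\partial(z,w)=\partial(u_0,w)$ and $f_z(w)=0$ otherwise. $\mathrm{Hom}_j(X)=\mathrm{span}\{f_z : z\in X_j\}$. *)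

(* Defs.v *)
(* Dual polar graphs over a finite field F.
   Vectors: 'rV[F]_n.  Subspaces of V = F^n are represented canonically by
   square matrices A : 'M[F]_n with <<A>>%MS = A (row space). *)
From HB Require Import structures.
From mathcomp Require Import all_boot all_order all_algebra.
From mathcomp Require Import reals.
Set Implicit Arguments. Unset Strict Implicit. Unset Printing Implicit Defensive.
Import Order.TTheory GRing.Theory Num.Theory.
Local Open Scope ring_scope.

(* The three kinds of forms, given by Gram matrices:
   - Alt M      : B(u,v) = u M v^T (alternating bilinear form),
   - Herm s M   : B(u,v) = u M (v^s)^T (Hermitian w.r.t. a field involution s),
   - Quad M     : Q(v) = v M v^T (quadratic form), polar form
                  B(u,v) = Q(u+v) - Q(u) - Q(v). *)
Inductive dpform (F : finFieldType) (n : nat) :=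
| Alt of 'M[F]_n
| Herm of {rmorphism F -> F} & 'M[F]_n
| Quad of 'M[F]_n.

Section DualPolar.
Variables (F : finFieldType) (n : nat).

Definition bil (M : 'M[F]_n) (u v : 'rV[F]_n) : F := (u *m M *m v^T) ord0 ord0.

Definition dp_B (phi : dpform F n) (u v : 'rV[F]_n) : F :=
  match phi with
  | Alt M => bil M u v
  | Herm s M => bil M u (map_mx s v)
  | Quad M => bil M (u + v) (u + v) - bil M u u - bil M v v
  end.

Definition dp_Q (phi : dpform F n) (v : 'rV[F]_n) : F :=
  match phi with
  | Quad M => bil M v v
  | _ => 0
  end.

Definition dp_valid (phi : dpform F n) : Prop :=
  match phi with
  | Alt M => forall u, bil M u u = 0
  | Herm s M => (forall a, s (s a) = a) /\ (exists a, s a != a) /\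
                (forall u v, dp_B phi u v = s (dp_B phi v u))
  | Quad M => True
  end.

Definition dp_nondeg (phi : dpform F n) : Prop :=
  match phi with
  | Quad _ => forall u, (forall v, dp_B phi u v = 0) -> dp_Q phi u = 0 -> u = 0
  | _ => forall u, (forall v, dp_B phi u v = 0) -> u = 0
  end.

Definition tot_iso (phi : dpform F n) (A : 'M[F]_n) : bool :=
  match phi with
  | Quad _ => [forall u : 'rV[F]_n, (u <= A)%MS ==> (dp_Q phi u == 0)]
  | _ => [forall u : 'rV[F]_n, forall v : 'rV[F]_n,
           ((u <= A)%MS && (v <= A)%MS) ==> (dp_B phi u v == 0)]
  end.

Definition witt (phi : dpform F n) : nat :=
  \max_(A : 'M[F]_n | tot_iso phi A) \rank A.

Definition dpX (phi : dpform F n) : {set 'M[F]_n} :=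
  [set A : 'M[F]_n | [&& (<<A>>%MS == A), tot_iso phi A & \rank A == witt phi]].

Definition dpdist (phi : dpform F n) (x y : 'M[F]_n) : nat :=
  witt phi - \rank (x :&: y)%MS.

Definition shell (phi : dpform F n) (u0 : 'M[F]_n) (j : nat) : {set 'M[F]_n} :=
  [set z in dpX phi | dpdist phi u0 z == j].

Variable R : realType.

Definition fz (phi : dpform F n) (u0 z w : 'M[F]_n) : R :=
  if dpdist phi u0 z + dpdist phi z w == dpdist phi u0 w then 1 else 0.

(* g : X -> R (given on all matrices, only values on X matter) lies in
   Hom_j(X) = span { f_z : z in X_j } *)
Definition in_Hom (phi : dpform F n) (u0 : 'M[F]_n) (j : nat) (g : 'M[F]_n -> R) : Prop :=
  exists c : 'M[F]_n -> R,
    forall w, w \in dpX phi -> g w = \sum_(z in shell phi u0 j) c z * fz phi u0 z w.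

End DualPolar.

(* Main.v *)
Require Import Defs.
From HB Require Import structures.
From mathcomp Require Import all_boot all_order all_algebra.
From mathcomp Require Import reals ring zify.
Set Implicit Arguments. Unset Strict Implicit. Unset Printing Implicit Defensive.
Import Order.TTheory GRing.Theory Num.Theory.
Local Open Scope ring_scope.

Section Form.
Variables (F : finFieldType) (n : nat).
Implicit Types (phi : dpform F n) (u v : 'rV[F]_n).

Definition Nm phi : 'M[F]_n :=
  match phi with Alt M => M | Herm _ M => M | Quad M => M + M^T end.
Definition sgm phi m p (A : 'M[F]_(m,p)) : 'M[F]_(m,p) :=
  match phi with Herm s _ => map_mx s A | _ => A end.

Lemma sgmD phi m p (A B : 'M[F]_(m,p)) : sgm phi (A + B) = sgm phi A + sgm phi B.
Proof. by case: phi => //= s M; rewrite map_mxD. Qed.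

Lemma sgmM phi m p q (A : 'M[F]_(m,p)) (B : 'M[F]_(p,q)) :
  sgm phi (A *m B) = sgm phi A *m sgm phi B.
Proof. by case: phi => //= s M; rewrite map_mxM. Qed.

Lemma sgm_row phi m p i (A : 'M[F]_(m,p)) : sgm phi (row i A) = row i (sgm phi A).
Proof. by case: phi => //= s M; rewrite map_row. Qed.

Lemma rank_sgm phi m p (A : 'M[F]_(m,p)) : \rank (sgm phi A) = \rank A.
Proof. by case: phi => //= s M; rewrite mxrank_map. Qed.

Lemma addE (A B : 'M[F]_1) : (A + B) 0 0 = A 0 0 + B 0 0.
Proof. by rewrite mxE. Qed.

Lemma Bmx phi u v : dp_B phi u v = (u *m Nm phi *m (sgm phi v)^T) 0 0.
Proof.
case: phi => [M|s M|M] //=; rewrite /bil.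
have E : (v *m M *m u^T) 0 0 = (u *m M^T *m v^T) 0 0.
  transitivity ((v *m M *m u^T)^T 0 0); first by rewrite [RHS]mxE.
  by rewrite !trmx_mul trmxK mulmxA.
rewrite linearD /= !mulmxDl !mulmxDr !addE E.

rewrite mulmxDl addE; ring.
Qed.

Lemma Badd_l phi u1 u2 v : dp_B phi (u1 + u2) v = dp_B phi u1 v + dp_B phi u2 v.
Proof. by rewrite !Bmx !mulmxDl addE. Qed.

Lemma Badd_r phi u v1 v2 : dp_B phi u (v1 + v2) = dp_B phi u v1 + dp_B phi u v2.
Proof. by rewrite !Bmx sgmD linearD /= mulmxDr addE. Qed.

Definition Pm phi m (A : 'M[F]_(m,n)) : 'M[F]_n := kermx (Nm phi *m (sgm phi A)^T).

Lemma PmP phi m (A : 'M[F]_(m,n)) v :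
  (v <= Pm phi A)%MS <-> (forall a, (a <= A)%MS -> dp_B phi v a = 0).
Proof.
split.
  move/sub_kermxP => H a /submxP [c ->].
  by rewrite Bmx sgmM trmx_mul !mulmxA -(mulmxA v) H mul0mx mxE.
move=> H; apply/sub_kermxP; apply/matrixP => i j.
rewrite (ord1 i) [RHS]mxE.
have := H _ (row_sub j A); rewrite Bmx sgm_row tr_row colE.
rewrite !mulmxA -(mulmxA v) -(mulmxA _ _ (delta_mx j 0)) -colE.
have -> : v *m col j (Nm phi *m (sgm phi A)^T) = col j (v *m (Nm phi *m (sgm phi A)^T)) by rewrite !colE mulmxA.
by rewrite [X in X = 0 -> _]mxE.
Qed.

Lemma rank_Pm phi m (A : 'M[F]_(m,n)) : (n - \rank A <= \rank (Pm phi A))%N.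
Proof.
rewrite mxrank_ker leq_sub2l //.
by rewrite (leq_trans (mxrankM_maxr _ _)) // mxrank_tr rank_sgm.
Qed.

Lemma tiB phi A u v : tot_iso phi A -> (u <= A)%MS -> (v <= A)%MS -> dp_B phi u v = 0.
Proof.
move=> + uA vA; case: phi => [M|s M|M] /=.
- by move/forallP/(_ u)/forallP/(_ v); rewrite uA vA /= => /eqP.
- by move/forallP/(_ u)/forallP/(_ v); rewrite uA vA /= => /eqP.
move=> /forallP H.
have Q w : (w <= A)%MS -> bil M w w = 0.
  by move=> wA; have := H w; rewrite wA /= => /eqP.
by rewrite Q ?addmx_sub // Q // Q // !subr0.
Qed.

Lemma ti_sub phi A C : (C <= A)%MS -> tot_iso phi A -> tot_iso phi C.
Proof.
move=> CA; case: phi => [M|s M|M] /= /forallP H; apply/forallP => a.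
- apply/forallP => b; apply/implyP => /andP[aC bC].
  by have /forallP/(_ b) := H a; rewrite (submx_trans aC CA) (submx_trans bC CA).
- apply/forallP => b; apply/implyP => /andP[aC bC].
  by have /forallP/(_ b) := H a; rewrite (submx_trans aC CA) (submx_trans bC CA).
apply/implyP => aC.
by have := H a; rewrite (submx_trans aC CA).
Qed.

Lemma Bsym0 phi u v : dp_valid phi -> dp_B phi u v = 0 -> dp_B phi v u = 0.
Proof.
case: phi => [M|s M|M] /=.
- move=> H E; have := H (u + v).
  have e1 := Badd_l (Alt M) u v (u + v); have e2 := Badd_r (Alt M) u u v;
  have e3 := Badd_r (Alt M) v u v; rewrite /= in e1 e2 e3.
  by rewrite e1 e2 e3 H H E !(add0r, addr0).
- by move=> [_ [_ H]] E; rewrite H E rmorph0.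
move=> _; rewrite (addrC v u) => <-; rewrite -!addrA; congr (_ + _); exact: addrC.
Qed.


Lemma tiQ (M A : 'M[F]_n) (a : 'rV[F]_n) : tot_iso (Quad M) A -> (a <= A)%MS -> bil M a a = 0.
Proof. by move=> /forallP /(_ a) /implyP H /H /eqP. Qed.

Lemma tiD phi (A w : 'M[F]_n) : dp_valid phi -> tot_iso phi A -> tot_iso phi w ->
  tot_iso phi (A + (w :&: Pm phi A))%MS.
Proof.
move=> val tA tw.
have dec : forall a : 'rV[F]_n, (a <= A + (w :&: Pm phi A))%MS -> exists a1 a2,
   [/\ a = a1 + a2, (a1 <= A)%MS, (a2 <= w)%MS & (a2 <= Pm phi A)%MS].
  move=> a Ha; case/sub_addsmxP: Ha => [[c1 c2] ->] /=; exists (c1 *m A), (c2 *m (w :&: Pm phi A))%MS.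
  have h := submxMl c2 (w :&: Pm phi A)%MS; rewrite sub_capmx in h.
  by case/andP: h => h1 h2; split; rewrite ?submxMl.
have BC : forall a b : 'rV[F]_n, (a <= A + (w :&: Pm phi A))%MS ->
    (b <= A + (w :&: Pm phi A))%MS -> dp_B phi a b = 0.
  move=> a b /dec [a1 [a2 [-> a1A a2w a2P]]] /dec [b1 [b2 [-> b1A b2w b2P]]].
  rewrite !Badd_l !Badd_r (tiB tA a1A b1A) (tiB tw a2w b2w).
  rewrite (Bsym0 val ((PmP _ _ _).1 b2P _ a1A)) ((PmP _ _ _).1 a2P _ b1A).
  by rewrite !addr0.
move: tA tw BC; case: phi val dec => [M|s M|M] /= val dec tA tw BC.
- apply/forallP => a; apply/forallP => b; apply/implyP => /andP[aC bC].
  by rewrite BC.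
- apply/forallP => a; apply/forallP => b; apply/implyP => /andP[aC bC].
  by rewrite BC.
apply/forallP => a; apply/implyP => aC; apply/eqP.
case/dec: aC => a1 [a2 [-> a1A a2w a2P]].
have a2C : (a2 <= A + (w :&: Pm (Quad M) A))%MS.
  by rewrite (submx_trans _ (addsmxSr _ _)) // sub_capmx a2w.
have := BC a1 a2 (submx_trans a1A (addsmxSl _ _)) a2C.
by rewrite /= (tiQ tA a1A) (tiQ tw a2w) !subr0.
Qed.

End Form.

Section Geo.
Local Unset Implicit Arguments.
Variables (F : finFieldType) (n : nat) (phi : dpform F n).
Hypothesis val : dp_valid phi.
Local Notation d := (witt phi).
Local Notation X := (dpX phi).
Implicit Types (u x y z w : 'M[F]_n).

Definition bt u z w := (dpdist phi u z + dpdist phi z w == dpdist phi u w).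

Lemma X_props z : z \in X -> [/\ <<z>>%MS = z, tot_iso phi z & \rank z = d].
Proof. by rewrite inE => /and3P [/eqP ? ? /eqP ?]. Qed.

Lemma rank_witt (A : 'M[F]_n) : tot_iso phi A -> (\rank A <= d)%N.
Proof. by move=> tA; rewrite /witt; apply: leq_bigmax_cond. Qed.

Lemma tri (a z w : 'M[F]_n) :
  (\rank (a :&: z) + \rank (z :&: w) <= \rank z + \rank (a :&: w))%N.
Proof.
rewrite -mxrank_sum_cap leq_add // mxrankS //.
  by rewrite addsmx_sub capmxSr capmxSl.
rewrite sub_capmx (submx_trans (capmxSl _ _) (capmxSl _ _)) /=.
exact: (submx_trans (capmxSr _ _) (capmxSr _ _)).
Qed.

Lemma rcap_le (a b : 'M[F]_n) : (\rank (a :&: b) <= \rank a)%N.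
Proof. exact/mxrankS/capmxSl. Qed.
Lemma rcap_ler (a b : 'M[F]_n) : (\rank (a :&: b) <= \rank b)%N.
Proof. exact/mxrankS/capmxSr. Qed.

Lemma bt_fwd u z w : \rank u = d -> \rank z = d -> \rank w = d -> bt u z w ->
  (z <= (u :&: z) + (z :&: w))%MS /\ (u :&: w <= z)%MS.
Proof.
move=> ru rz rw; rewrite /bt /dpdist => /eqP E.
have sSz : ((u :&: z) + (z :&: w) <= z)%MS by rewrite addsmx_sub capmxSr capmxSl.
have sCp : ((u :&: z) :&: (z :&: w) <= u :&: w)%MS.
  rewrite sub_capmx (submx_trans (capmxSl _ _) (capmxSl _ _)) /=.
  exact: (submx_trans (capmxSr _ _) (capmxSr _ _)).
have e := mxrank_sum_cap (u :&: z)%MS (z :&: w)%MS.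
have h1 := mxrankS sSz; have h2 := mxrankS sCp.
have := rcap_le u z; have := rcap_ler z w; have := rcap_le u w.
move=> r1 r2 r3.
have [e1 e2] : \rank ((u :&: z) + (z :&: w))%MS = \rank z /\
  \rank ((u :&: z) :&: (z :&: w))%MS = \rank (u :&: w)%MS by lia.
split; first by rewrite -(mxrank_leqif_sup sSz).2 e1.
apply: (submx_trans _ (submx_trans (capmxSr (u :&: z)%MS (z :&: w)%MS) (capmxSl z w))).
by rewrite -(mxrank_leqif_sup sCp).2 e2.
Qed.

Lemma bt_bwd u z w : \rank u = d -> \rank z = d -> \rank w = d ->
  (z <= (u :&: z) + (z :&: w))%MS -> (u :&: w <= z)%MS -> bt u z w.
Proof.
move=> ru rz rw zS uwz; rewrite /bt /dpdist; apply/eqP.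
have sSz : ((u :&: z) + (z :&: w) <= z)%MS by rewrite addsmx_sub capmxSr capmxSl.
have sCp : ((u :&: z) :&: (z :&: w) <= u :&: w)%MS.
  rewrite sub_capmx (submx_trans (capmxSl _ _) (capmxSl _ _)) /=.
  exact: (submx_trans (capmxSr _ _) (capmxSr _ _)).
have sCp' : (u :&: w <= (u :&: z) :&: (z :&: w))%MS.
  by rewrite !sub_capmx capmxSl capmxSr uwz.
have e := mxrank_sum_cap (u :&: z)%MS (z :&: w)%MS.
have h1 := mxrankS sSz; have h2 := mxrankS sCp; have h3 := mxrankS sCp'; have h4 := mxrankS zS.
have := rcap_le u z; have := rcap_ler z w; have := rcap_le u w.
move=> r1 r2 r3.
lia.
Qed.

Lemma bt_trans u x z w : \rank u = d -> \rank x = d -> \rank z = d -> \rank w = d ->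
  bt u x z -> bt u z w -> bt u x w.
Proof.
move=> ru rx rz rw; rewrite /bt /dpdist => /eqP E1 /eqP E2; apply/eqP.
have t1 := tri x z w; have t2 := tri u x w.
have := rcap_le u x; have := rcap_le x z; have := rcap_le u z; have := rcap_le z w;
have := rcap_le u w; have := rcap_le x w.
have := rcap_ler u x; have := rcap_ler x z; have := rcap_ler u z; have := rcap_ler z w;
have := rcap_ler u w; have := rcap_ler x w.
lia.
Qed.

End Geo.
Arguments bt {F n} phi u z w.
Arguments X_props {F n phi z}.
Arguments rank_witt {F n phi A}.
Arguments bt_fwd {F n phi} u z w.
Arguments bt_bwd {F n phi} u z w.
Arguments bt_trans {F n phi} u x z w.

Section Main.
Local Unset Implicit Arguments.
Variables (F : finFieldType) (n : nat) (phi : dpform F n).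
Hypothesis val : dp_valid phi.
Local Notation d := (witt phi).
Local Notation X := (dpX phi).
Variables (u x y w : 'M[F]_n).
Hypotheses (uX : u \in X) (xX : x \in X) (yX : y \in X) (wX : w \in X).

Local Notation U := (x :&: y)%MS.
Local Notation A := (u :&: (x :&: y))%MS.
Local Notation C := (u :&: (x :&: y) + (w :&: Pm phi (u :&: (x :&: y))))%MS.

Hypotheses (bxw : bt phi u x w) (byw : bt phi u y w).

Lemma Ax : (A <= x)%MS.
Proof. exact: submx_trans (capmxSr _ _) (capmxSl _ _). Qed.
Lemma Ay : (A <= y)%MS.
Proof. exact: submx_trans (capmxSr _ _) (capmxSr _ _). Qed.
Lemma AU : (A <= U)%MS.
Proof. exact: capmxSr. Qed.

Lemma tA : tot_iso phi A.
Proof. by have [_ tu _] := X_props uX; apply: ti_sub tu; apply: capmxSl. Qed.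

Lemma tC : tot_iso phi C.
Proof. by have [_ tw _] := X_props wX; apply: tiD val tA tw. Qed.

Lemma inPm z (S : 'M[F]_n) : tot_iso phi z -> (A <= z)%MS -> (S <= z)%MS -> (S <= Pm phi A)%MS.
Proof.
move=> tz Az Sz; apply/rV_subP => v vS; apply/PmP => a aA.
exact: tiB tz (submx_trans vS Sz) (submx_trans aA Az).
Qed.

Lemma uniq_z z : z \in X -> (U <= z)%MS -> bt phi u x z -> bt phi u y z -> bt phi u z w ->
  z = <<C>>%MS.
Proof.
move=> zX Uz bxz byz bzw.
have [gz tz rz] := X_props zX; have [_ _ ru] := X_props uX.
have [_ _ rx] := X_props xX; have [_ _ ry] := X_props yX; have [_ _ rw] := X_props wX.
have [zS _] := bt_fwd u z w ru rz rw bzw.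
have [_ uzx] := bt_fwd u x z ru rx rz bxz.
have [_ uzy] := bt_fwd u y z ru ry rz byz.
have uzA : (u :&: z <= A)%MS by rewrite sub_capmx capmxSl sub_capmx uzx uzy.
have Az : (A <= z)%MS := submx_trans AU Uz.
have zC : (z <= C)%MS.
  apply: (submx_trans zS); apply: addsmxS uzA _.
  by rewrite sub_capmx capmxSr (inPm z _ tz Az (capmxSl z w)).
have rC := rank_witt tC.
have zeC : (z == C)%MS.
  by rewrite -(mxrank_leqif_eq zC).2 eqn_leq mxrankS //= rz rC.
by rewrite -gz; apply/genmxP.
Qed.

Lemma uCA : (u :&: C <= A)%MS.
Proof.
have [_ _ ru] := X_props uX; have [_ _ rx] := X_props xX; have [_ _ ry] := X_props yX; have [_ _ rw] := X_props wX.
apply/rV_subP => v; rewrite sub_capmx => /andP [vu vC].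
case/sub_addsmxP: vC => [[c1 c2] E] /=.
have aA : (c1 *m A <= A)%MS := submxMl _ _.
have bW : (c2 *m (w :&: Pm phi A) <= w)%MS.
  exact: submx_trans (submxMl _ _) (capmxSl _ _).
have bu : (c2 *m (w :&: Pm phi A) <= u)%MS.
  have -> : c2 *m (w :&: Pm phi A)%MS = v - c1 *m A by rewrite E addrC addKr.
  rewrite addmx_sub // eqmx_opp; exact: submx_trans aA (capmxSl _ _).
have [_ uwx] := bt_fwd u x w ru rx rw bxw.
have [_ uwy] := bt_fwd u y w ru ry rw byw.
have uwA : (u :&: w <= A)%MS by rewrite sub_capmx capmxSl sub_capmx uwx uwy.
by rewrite E addmx_sub // (submx_trans _ uwA) // sub_capmx bu bW.
Qed.


Lemma uwA : (u :&: w <= A)%MS.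
Proof.
have [_ _ ru] := X_props uX; have [_ _ rx] := X_props xX; have [_ _ ry] := X_props yX;
have [_ _ rw] := X_props wX.
have [_ uwx] := bt_fwd u x w ru rx rw bxw.
have [_ uwy] := bt_fwd u y w ru ry rw byw.
by rewrite sub_capmx capmxSl sub_capmx uwx uwy.
Qed.

Lemma rankC : \rank C = d.
Proof.
have [_ tw rw] := X_props wX.
apply/eqP; rewrite eqn_leq (rank_witt tC) /=.
set D := (A :\: w)%MS.
have h1 := mxrank_sum_cap D (A :&: w)%MS.
have eA := addsmx_diff_cap_eq A w.
rewrite eA in h1.
have h0 : \rank (D :&: (A :&: w))%MS = 0%N.
  apply/eqP; rewrite -leqn0 -(mxrank0 F n n) mxrankS //.
  by rewrite -(capmx_diff A w) capmxS // capmxSr.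
have h2 : (w :&: Pm phi D <= w :&: Pm phi A)%MS.
  apply/rV_subP => v; rewrite !sub_capmx => /andP [vw vP]; rewrite vw /=.
  apply/PmP => a aA.
  have : (a <= D + A :&: w)%MS by rewrite eA.
  case/sub_addsmxP => [[c1 c2] ->] /=.
  rewrite Badd_r ((PmP _ _ _).1 vP _ (submxMl _ _)) add0r.
  exact: tiB tw vw (submx_trans (submxMl _ _) (capmxSr _ _)).
have h3 := mxrank_sum_cap w (Pm phi D).
have h4 := rank_leq_col (w + Pm phi D)%MS.
have h5 := rank_Pm phi D.
have h6 := rank_leq_col D.
have h7 := mxrankS h2.
have h8 := mxrank_sum_cap A (w :&: Pm phi A)%MS.
have h9 : (\rank (A :&: (w :&: Pm phi A)) <= \rank (A :&: w))%N.
  by rewrite mxrankS // capmxS // capmxSl.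
lia.
Qed.

Lemma z0X : <<C>>%MS \in X.
Proof.
rewrite inE genmx_id eqxx /= mxrank_gen rankC eqxx andbT.
by apply: ti_sub tC; rewrite genmxE.
Qed.

Lemma bt_x_z0 x' : x' \in X -> (A <= x')%MS -> bt phi u x' w -> bt phi u x' <<C>>%MS.
Proof.
move=> x'X Ax' bx'w.
have [_ tx' rx'] := X_props x'X; have [_ _ ru] := X_props uX; have [_ _ rw] := X_props wX.
have rz0 : \rank <<C>>%MS = d by rewrite mxrank_gen rankC.
have [x'S _] := bt_fwd u x' w ru rx' rw bx'w.
apply: bt_bwd => //.
  apply: (submx_trans x'S); apply: addsmxS => //.
  rewrite sub_capmx capmxSl /= genmxE (submx_trans _ (addsmxSr _ _)) //.
  by rewrite sub_capmx capmxSr (inPm x' _ tx' Ax' (capmxSl _ _)).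
apply: submx_trans Ax'; apply: submx_trans uCA.
by rewrite capmxS // genmxE.
Qed.

Lemma bt_z0_w : bt phi u <<C>>%MS w.
Proof.
have [_ _ ru] := X_props uX; have [_ _ rw] := X_props wX.
have rz0 : \rank <<C>>%MS = d by rewrite mxrank_gen rankC.
apply: bt_bwd => //; last by rewrite genmxE (submx_trans uwA (addsmxSl _ _)).
rewrite genmxE; apply: addsmxS.
  by rewrite sub_capmx capmxSl genmxE addsmxSl.
by rewrite sub_capmx genmxE addsmxSr capmxSl.
Qed.

Lemma Uz0 : (U <= <<C>>)%MS.
Proof.
have [_ tx rx] := X_props xX; have [_ _ ry] := X_props yX.
have [_ _ ru] := X_props uX; have [_ _ rw] := X_props wX.
have [xS uwx] := bt_fwd u x w ru rx rw bxw.
have [yS _] := bt_fwd u y w ru ry rw byw.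
rewrite genmxE.
have UAw : (U <= A + (U :&: w))%MS.
  apply/rV_subP => v vU.
  have vx : (v <= x)%MS := submx_trans vU (capmxSl _ _).
  have vy : (v <= y)%MS := submx_trans vU (capmxSr _ _).
  case/sub_addsmxP: (submx_trans vx xS) => [[c1 c2] /= E1].
  case/sub_addsmxP: (submx_trans vy yS) => [[e1 e2] /= E2].
  set p := c1 *m (u :&: x)%MS in E1; set q := c2 *m (x :&: w)%MS in E1.
  set p' := e1 *m (u :&: y)%MS in E2; set q' := e2 *m (y :&: w)%MS in E2.
  have pu : (p <= u)%MS := submx_trans (submxMl _ _) (capmxSl _ _).
  have px : (p <= x)%MS := submx_trans (submxMl _ _) (capmxSr _ _).
  have p'u : (p' <= u)%MS := submx_trans (submxMl _ _) (capmxSl _ _).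
  have p'y : (p' <= y)%MS := submx_trans (submxMl _ _) (capmxSr _ _).
  have qw : (q <= w)%MS := submx_trans (submxMl _ _) (capmxSr _ _).
  have q'w : (q' <= w)%MS := submx_trans (submxMl _ _) (capmxSr _ _).
  have dpp : (p - p' <= u :&: w)%MS.
    rewrite sub_capmx addmx_sub ?eqmx_opp //=.
    have -> : p - p' = q' - q.
      by apply/eqP; rewrite subr_eq addrAC eq_sym subr_eq -E1 E2 addrC.
    by rewrite addmx_sub ?eqmx_opp.
  have p'x : (p' <= x)%MS.
    have -> : p' = p - (p - p') by rewrite opprB addrC subrK.
    by rewrite addmx_sub ?eqmx_opp // (submx_trans dpp uwx).
  have p'A : (p' <= A)%MS by rewrite sub_capmx p'u sub_capmx p'x.
  have q'U : (q' <= U :&: w)%MS.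
    have -> : q' = v - p' by rewrite E2 addrC addKr.
    rewrite sub_capmx addmx_sub ?eqmx_opp ?(submx_trans p'A AU) //=.
    by rewrite E2 addrC addKr.
  by rewrite E2 addmx_sub_adds.
apply: (submx_trans UAw); apply: addsmxS => //.
by rewrite sub_capmx capmxSr (inPm x _ tx Ax (submx_trans (capmxSl _ _) (capmxSl _ _))).
Qed.

End Main.

Unset Implicit Arguments.

Theorem propositionA5 (F : finFieldType) (n : nat) (phi : dpform F n)
  (R : realType) (u0 x y : 'M[F]_n) :
  dp_valid phi -> dp_nondeg phi ->
  u0 \in dpX phi -> x \in dpX phi -> y \in dpX phi ->
  let U := (x :&: y)%MS in
  let l := \rank (u0 :&: U)%MS in
  let X' := [set z in dpX phi | (U <= z)%MS] in
  (forall w, w \in dpX phi ->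
     fz R phi u0 x w * fz R phi u0 y w =
     \sum_(z in X' | (fz R phi u0 x z == 1) && (fz R phi u0 y z == 1)) fz R phi u0 z w)
  /\ in_Hom phi u0 (witt phi - l) (fun w => fz R phi u0 x w * fz R phi u0 y w).
Proof.
move=> val _ uX xX yX U l X'; rewrite /X' /l /U {X' l U}.
have fzE z w : fz R phi u0 z w = if bt phi u0 z w then 1 else 0 by [].
have fz1 z w : (fz R phi u0 z w == 1) = bt phi u0 z w.
  by rewrite fzE; case: ifP; rewrite ?eqxx // eq_sym oner_eq0.
have [_ _ ru] := X_props uX; have [_ _ rx] := X_props xX; have [_ _ ry] := X_props yX.
have part1 : forall w, w \in dpX phi -> fz R phi u0 x w * fz R phi u0 y w =
   \sum_(z in [set z in dpX phi | (x :&: y <= z)%MS] |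
          (fz R phi u0 x z == 1) && (fz R phi u0 y z == 1)) fz R phi u0 z w.
  move=> w wX; have [_ _ rw] := X_props wX.
  case: (boolP (bt phi u0 x w && bt phi u0 y w)) => [/andP [bxw byw] | nb].
    rewrite !fzE bxw byw mulr1.
    rewrite (bigD1 (<<(u0 :&: (x :&: y) + (w :&: Pm phi (u0 :&: (x :&: y))))%MS>>)%MS) /=; last first.
      rewrite inE; apply/and3P; split; first (apply/andP; split).
      - exact (z0X _ _ _ val _ _ _ _ uX xX yX wX bxw byw).
      - exact: (Uz0 _ _ _ _ _ _ _ uX xX yX wX bxw byw).
      - rewrite fz1; apply: (bt_x_z0 _ _ _ val _ _ _ _ uX xX yX wX bxw byw x xX) => //.
        exact: (submx_trans (capmxSr _ _) (capmxSl _ _)).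
      - rewrite fz1; apply: (bt_x_z0 _ _ _ val _ _ _ _ uX xX yX wX bxw byw y yX) => //.
        exact: (submx_trans (capmxSr _ _) (capmxSr _ _)).
    rewrite fzE (bt_z0_w _ _ _ val _ _ _ _ uX xX yX wX bxw byw) big1 ?addr0 //.
    move=> z /andP [/andP [zX' /andP [fx fy]] nz].
    rewrite fzE; case: ifP => // bzw; exfalso; move: nz => /eqP; apply.
    move: zX'; rewrite inE => /andP [zX Uz].
    by apply: (uniq_z _ _ _ val _ _ _ _ uX xX yX wX _ zX Uz) => //; rewrite -fz1.
  have lhs0 : fz R phi u0 x w * fz R phi u0 y w = 0.
    rewrite !fzE; move: nb; case: (bt phi u0 x w); case: (bt phi u0 y w) => //= _.
    - by rewrite mulr0.
    - by rewrite mul0r.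
    - by rewrite mul0r.
  rewrite lhs0 big1 // => z /andP [zX' /andP [fx fy]].
  rewrite fzE; case: ifP => // bzw; exfalso; move/negP: nb; apply.
  move: zX'; rewrite inE => /andP [zX _]; have [_ _ rz] := X_props zX.
  rewrite fz1 in fx; rewrite fz1 in fy.
  by rewrite (bt_trans u0 x z w ru rx rz rw fx bzw) (bt_trans u0 y z w ru ry rz rw fy bzw).
split; first exact: part1.
exists (fun z => if (z \in [set z in dpX phi | (x :&: y <= z)%MS]) &&
   ((fz R phi u0 x z == 1) && (fz R phi u0 y z == 1)) then 1 else 0).
move=> w wX; rewrite part1 //.
rewrite big_mkcond [RHS]big_mkcond /=; apply: eq_bigr => z _.
case: ifP => [/andP [zX' /andP [fx fy]] | nP]; last by rewrite mul0r if_same.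
move: (zX'); rewrite inE => /andP [zX Uz]; have [_ _ rz] := X_props zX.
rewrite fz1 in fx; rewrite fz1 in fy.
have [_ uzx] := bt_fwd u0 x z ru rx rz fx.
have [_ uzy] := bt_fwd u0 y z ru ry rz fy.
have eA : (u0 :&: z == u0 :&: (x :&: y))%MS.
  rewrite /eqmx sub_capmx capmxSl sub_capmx uzx uzy /=.
  by rewrite sub_capmx capmxSl (submx_trans (capmxSr _ _) Uz).
have zsh : z \in shell phi u0 (witt phi - \rank (u0 :&: (x :&: y))%MS).
  by rewrite inE zX /= /dpdist (eqmx_rank eA).
by rewrite zsh mul1r.
Qed.
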